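(* Let $n\geq 3$ and let $G$ be a connected graph with $|V(G)|<n$. Then $\mathrm{ldim}_f(G\square K_n)=\frac{n}{2}$.
   Context: All graphs are finite, simple and connected; $d$ is the shortest-path distance; $K_n$ is the complete graph on $n$ vertices. For an edge $uv$ of a graph $X$, $L_X(uv)=\{x\in V(X): d_X(u,x)\neq d_X(v,x)\}$. A function $f:V(X)\to[0,1]$ is a local resolving function of $X$ if $\sum_{x\in L_X(uv)}f(x)\geq 1$ for every edge $uv$; $\mathrm{ldim}_f(X)$ is the minimum of $\sum_{v}f(v)$ over all local resolving functions. The Cartesian product $G\square H$ has vertex set $V(G)\times V(H)$, with $(u_1,v_1)$ adjacent to $(u_2,v_2)$ iff ($u_1u_2\in E(G)$ and $v_1=v_2$) or ($u_1=u_2$ and $v_1v_2\in E(H)$). *)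

(* Defs.v *)
From HB Require Import structures.
From mathcomp Require Import all_boot all_order all_algebra.
Set Implicit Arguments. Unset Strict Implicit. Unset Printing Implicit Defensive.
Import Order.TTheory GRing.Theory Num.Theory.

Definition simple_graph (T : finType) (e : rel T) : Prop :=
  irreflexive e /\ symmetric e.

Definition connected_graph (T : finType) (e : rel T) : Prop :=
  forall x y : T, connect e x y.

Fixpoint reach (T : finType) (e : rel T) (k : nat) (x y : T) : bool :=
  match k with
  | 0 => x == y
  | k'.+1 => [exists z, e x z && reach e k' z y]
  end.

(* Shortest-path distance: least k (< |V|) such that a k-walk from x to y
   exists (in a connected graph such a k always exists). *)
Definition gdist (T : finType) (e : rel T) (x y : T) : nat :=
  find (fun k => reach e k x y) (iota 0 #|T|).

Definition Lset (T : finType) (e : rel T) (u v : T) : {set T} :=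
  [set x | gdist e u x != gdist e v x].

Definition local_resolving_fun (R : realFieldType) (T : finType) (e : rel T)
    (f : T -> R) : Prop :=
  (forall x, (0 <= f x <= 1)%R) /\
  (forall u v, e u v -> (1 <= (\sum_(x in Lset e u v) f x)%R)%R).

Definition ldimf_is (R : realFieldType) (T : finType) (e : rel T) (r : R) : Prop :=
  (exists f : T -> R, local_resolving_fun e f /\ (\sum_x f x)%R = r) /\
  (forall f : T -> R, local_resolving_fun e f -> (r <= (\sum_x f x)%R)%R).

Definition cart_prod (T1 T2 : finType) (e1 : rel T1) (e2 : rel T2) : rel (T1 * T2) :=
  fun a b => (e1 a.1 b.1 && (a.2 == b.2)) || ((a.1 == b.1) && e2 a.2 b.2).

Definition complete_graph (n : nat) : rel 'I_n := fun i j => i != j.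
Arguments complete_graph n : clear implicits.

(* Main.v *)
Require Import Defs.
From HB Require Import structures.
From mathcomp Require Import all_boot all_order all_algebra.
From mathcomp Require Import fingroup perm.
From mathcomp Require Import ring lra zify.
Import Order.TTheory GRing.Theory Num.Theory.
Set Implicit Arguments. Unset Strict Implicit.

Section Gen.
Variable T : finType.
Variable e : rel T.

Lemma path_reach x p : path e x p -> reach e (size p) x (last x p).
Proof. elim: p x => [|y p IH] x /=; first by rewrite eqxx.
move/andP=> [exy hp]. apply/existsP; exists y. by rewrite exy IH. Qed.

Lemma reach_connect k x y : reach e k x y -> connect e x y.
Proof. elim: k x => [|k IH] x /=; first by move/eqP->; exact: connect0.
case/existsP=> z /andP[exz hz]. exact: connect_trans (connect1 exz) (IH _ hz). Qed.

Lemma gdist_le k x y : (k < #|T|)%N -> reach e k x y -> (gdist e x y <= k)%N.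
Proof. move=> hk hr. rewrite leqNgt; apply/negP=> lt.
have := before_find 0 lt. by rewrite nth_iota // add0n hr. Qed.

Lemma gdist_reach x y : (gdist e x y < #|T|)%N -> reach e (gdist e x y) x y.
Proof. move=> h.
have hh : has (fun k => reach e k x y) (iota 0 #|T|) by rewrite has_find size_iota.
have := nth_find 0 hh. by rewrite nth_iota // add0n. Qed.

Lemma gdist_lt x y : connect e x y -> (gdist e x y < #|T|)%N.
Proof.
case/connectP=> p hp ->; case: (shortenP hp) => p' hp' hu _.
have hs : (size p' < #|T|)%N.
  have h : #|x :: p'| = size (x :: p') by apply/card_uniqP. have := max_card (mem (x :: p')).
  by rewrite h.
exact: leq_ltn_trans (gdist_le hs (path_reach hp')) hs.
Qed.

Lemma reach_perm (s : {perm T}) : (forall a b, e (s a) (s b) = e a b) ->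
  forall k a b, reach e k (s a) (s b) = reach e k a b.
Proof. move=> hs; elim=> [|k IH] a b /=; first by rewrite (inj_eq perm_inj).
apply/existsP/existsP=> [[z /andP[h1 h2]]|[z /andP[h1 h2]]].
- exists ((s^-1)%g z). rewrite -hs -IH permKV. by rewrite h1 h2.
- exists (s z). by rewrite hs IH h1 h2.
Qed.

Lemma gdist_perm (s : {perm T}) : (forall a b, e (s a) (s b) = e a b) ->
  forall a b, gdist e (s a) (s b) = gdist e a b.
Proof. move=> hs a b; rewrite /gdist; apply: eq_find => k. exact: reach_perm. Qed.

Lemma LsetC u v : Lset e u v = Lset e v u.
Proof. by apply/setP => w; rewrite !inE eq_sym. Qed.

End Gen.
Section Prod.
Variable T : finType.
Variable e : rel T.
Variable n : nat.
Hypothesis hsg : simple_graph e.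
Hypothesis hcon : connected_graph e.
Hypothesis hT : (0 < #|T|)%N.
Hypothesis hn : (3 <= n)%N.

Local Notation X := (cart_prod e (complete_graph n)).
Local Notation V := (T * 'I_n)%type.

Lemma cardV : #|{: V}| = (#|T| * n)%N.
Proof. by rewrite card_prod card_ord. Qed.

Lemma cardV2 : (1 < #|{: V}|)%N.
Proof. rewrite cardV; nia. Qed.

Lemma reach_layer k g x a : reach e k g x -> reach X k (g,a) (x,a).
Proof. elim: k g => [|k IH] g /=; first by move/eqP->.
case/existsP=> z /andP[h1 h2]. apply/existsP; exists (z,a).
by rewrite IH // /cart_prod /= h1 eqxx. Qed.

Lemma X_connected : connected_graph X.
Proof.
move=> [g a] [x b].
have h1 : connect X (g,a) (x,a).
  case/connectP: (hcon g x) => p hp ->.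
  exact: reach_connect (reach_layer a (path_reach hp)).
apply: connect_trans h1 _.
case: (eqVneq a b) => [->|ab]; first exact: connect0.
apply: connect1. by rewrite /cart_prod /complete_graph /= eqxx ab orbT.
Qed.

Lemma reach_proj k u w c : reach X k u w ->
  exists k', ((k' + (u.2 != w.2)) <= k)%N /\ reach X k' (u.1,c) (w.1,c).
Proof.
elim: k u => [|k IH] u /=.
  move/eqP->. exists 0%N; by split; rewrite /= eqxx.
case/existsP=> z /andP[hu hz]. have [k'' [hk hr]] := IH z hz.
rewrite /cart_prod /complete_graph in hu.
case/orP: hu => /andP[h1 h2].
- exists k''.+1. split.
    by rewrite (eqP h2) addSn ltnS.
  apply/existsP; exists (z.1,c); apply/andP; split; last exact: hr. by rewrite /cart_prod /= h1 eqxx.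
- exists k''. split.
    have : (k'' <= k)%N by apply: leq_trans hk; rewrite leq_addr.
    by case: (u.2 != w.2) => /=; rewrite ?addn1 ?addn0 // => h; apply: leqW.
  by rewrite (eqP h1).
Qed.

Lemma Xsym : symmetric X.
Proof. have [_ hs] := hsg. move=> a b. rewrite /cart_prod /complete_graph.
by rewrite hs [a.2 == _]eq_sym [a.1 == _]eq_sym. Qed.

Lemma V0 : (0 < #|{: V}|)%N.
Proof. by apply: ltn_trans cardV2. Qed.

Lemma gd0 a b : gdist X a b = 0%N -> a = b.
Proof. move=> h. have := gdist_reach (e:=X) (x:=a) (y:=b). rewrite h => /(_ V0) /=.
by move/eqP. Qed.

Lemma gdaa a : gdist X a a = 0%N.
Proof. apply/eqP; rewrite -leqn0. apply: gdist_le V0 _. by rewrite /= eqxx. Qed.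

Lemma gd1 a b : X a b -> (gdist X a b <= 1)%N.
Proof. move=> h. apply: gdist_le cardV2 _. apply/existsP; exists b. by rewrite h /= eqxx. Qed.

Lemma gd1r a b : gdist X a b = 1%N -> X a b.
Proof. move=> h. have := gdist_reach (e:=X) (x:=a) (y:=b). rewrite h => /(_ cardV2) /=.
case/existsP=> z /andP[hz /eqP <-]. exact: hz. Qed.

Lemma type1 g h i c : e g h -> (g,c) \in Lset X (g,i) (h,i).
Proof.
move=> egh. have [hirr _] := hsg.
have gh : g != h. apply/eqP=> E. by rewrite E hirr in egh.
rewrite inE. case: (eqVneq c i) => [->|ci].
  rewrite gdaa eq_sym. apply/eqP=> /gd0 [] /eqP. by rewrite eq_sym (negbTE gh).
have d1 : gdist X (g,i) (g,c) = 1%N.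
  have : X (g,i) (g,c) by rewrite /cart_prod /complete_graph /= eqxx eq_sym ci orbT.
  move/gd1. have h0 : gdist X (g,i) (g,c) != 0%N.
    apply/eqP => /gd0 [] /eqP. by rewrite eq_sym (negbTE ci).
  move: h0. case: (gdist X (g,i) (g,c)) => [|[|]] //.
rewrite d1. apply/eqP=> /esym /gd1r. rewrite /cart_prod /complete_graph /=.
by rewrite eq_sym (negbTE ci) andbF eq_sym (negbTE gh).
Qed.

Lemma type2a g x i j : i != j -> (x,i) \in Lset X (g,i) (g,j).
Proof.
move=> ij. rewrite inE.
have hl := gdist_lt (X_connected (g,j) (x,i)).
have [k' [hk hr]] := reach_proj i (gdist_reach hl).
rewrite /= eq_sym ij addn1 in hk.
have hk' : (k' < #|{: V}|)%N by apply: ltn_trans hk hl.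
have := gdist_le hk' hr. move=> /= h2.
rewrite neq_ltn. apply/orP; left. by apply: leq_ltn_trans h2 hk.
Qed.

Definition swp (i j : 'I_n) (w : V) : V := (w.1, tperm i j w.2).
Lemma swp_inj i j : injective (swp i j).
Proof. move=> [a b] [c d] [-> /perm_inj ->]. done. Qed.

Lemma type2c g x i j k : k != i -> k != j -> (x,k) \notin Lset X (g,i) (g,j).
Proof.
move=> ki kj. rewrite inE negbK.
set s := perm (@swp_inj i j).
have hs : forall a b, X (s a) (s b) = X a b.
  move=> [a1 a2] [b1 b2]. rewrite !permE /swp /cart_prod /complete_graph /=.
  by rewrite (inj_eq perm_inj).
have := gdist_perm hs (g,i) (x,k). rewrite !permE /swp /= tpermL tpermD //;
  try by rewrite eq_sym.
by move=> ->.
Qed.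

End Prod.

Unset Implicit Arguments.
Theorem theorem3p13 (R : realFieldType) (T : finType) (e : rel T) (n : nat) :
  (3 <= n)%N -> simple_graph e -> connected_graph e ->
  (0 < #|T|)%N -> (#|T| < n)%N ->
  ldimf_is (cart_prod e (complete_graph n)) ((n%:R : R) / 2%:R)%R.
Proof.
move=> hn hsg hcon hT hTn.
have [hirr hsym] := hsg.
split.
- set m := #|T|.
  set c : R := (((m.*2)%:R)^-1)%R.
  have hm : ((0 : R) < (m.*2)%:R)%R by rewrite ltr0n double_gt0.
  exists (fun _ => c). split; first split.
  + move=> _. rewrite invr_ge0 ler0n /= invf_le1 // ler1n double_gt0 //.
  + move=> u v huv. rewrite sumr_const.
    have hcard : (m.*2 <= #|Lset (cart_prod e (complete_graph n)) u v|)%N.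
      move: u v huv => [g i] [h k]. rewrite {1}/cart_prod /complete_graph /=.
      case/orP=> [/andP[egh /eqP ik]|/andP[/eqP gh ik]].
      * subst k. have gh : g != h by apply/eqP=> E; rewrite E hirr in egh.
        apply: leq_trans (subset_leq_card (_ : setX [set g; h] [set: 'I_n] \subset _)).
          rewrite cardsX cards2 gh cardsT card_ord -mul2n mulnC /=. rewrite /m; lia.
        apply/subsetP=> [[y d]]; rewrite in_setX in_set2 => /andP[/orP[/eqP->|/eqP->] _].
          exact: type1.
        rewrite LsetC. apply: type1 => //. by rewrite hsym.
      * subst h. apply: leq_trans (subset_leq_card (_ : setX [set: T] [set i; k] \subset _)).
          by rewrite cardsX cards2 ik cardsT -mul2n mulnC.
        apply/subsetP=> [[y d]]; rewrite in_setX in_set2 => /andP[_ /orP[/eqP->|/eqP->]].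
          exact: type2a.
        rewrite LsetC. apply: type2a => //. by rewrite eq_sym.
    rewrite -mulr_natr. apply: le_trans (_ : (c * (m.*2)%:R <= _)%R).
      by rewrite mulVf // gt_eqF.
    apply: ler_wpM2l; [by rewrite invr_ge0 ltW | by rewrite ler_nat].
  + rewrite sumr_const cardV -mulr_natr /c -muln2 !natrM. field.
    by rewrite pnatr_eq0 -lt0n.
- move=> f [hf01 hf].
  have hf0 : forall w, (0 <= f w)%R by move=> w; case/andP: (hf01 w).
  set s := fun k : 'I_n => (\sum_(x : T) f (x,k))%R.
  set S := (\sum_k s k)%R.
  have hS : (\sum_w f w)%R = S.
    rewrite /S /s exchange_big pair_big /=. by apply: eq_bigr => [[]].
  case/card_gt0P: hT => g0 _.
  have hpair : forall i j, i != j -> (1 <= s i + s j)%R.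
    move=> i j ij.
    have hedge : cart_prod e (complete_graph n) (g0,i) (g0,j).
      by rewrite /cart_prod /complete_graph /= eqxx ij orbT.
    apply: le_trans (hf _ _ hedge) _.
    rewrite big_mkcond /=.
    apply: le_trans (_ : (_ <= \sum_w (if (w.2 == i) || (w.2 == j) then f w else 0))%R) _.
      apply: ler_sum => -[y d] _ /=.
      case: ifP => hL; case: ifP => hd //.
      have : (y,d) \notin Lset (cart_prod e (complete_graph n)) (g0,i) (g0,j).
        by apply: type2c; apply/negP => /eqP E; rewrite E eqxx ?orbT in hd.
      by rewrite hL.
    have -> : (\sum_w (if (w.2 == i) || (w.2 == j) then f w else 0) =
       \sum_y \sum_d (if (d == i) || (d == j) then f (y,d) else 0))%R.
      rewrite pair_big /=. by apply: eq_bigr => [[]].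
    rewrite /s -big_split /= le_eqVlt; apply/orP; left; apply/eqP.
    apply: eq_bigr => y _.
    rewrite (bigD1 i) //= eqxx /= (bigD1 j) /=; last by rewrite eq_sym.
    rewrite eqxx orbT big1 ?addr0 //.
    move=> k /andP[kj ki]. by rewrite (negbTE ki) (negbTE kj).
  have hi : forall i, (n%:R - 1 - S <= (n%:R - 2) * s i)%R.
    move=> i.
    have hd : (\sum_j ((i == j)%:R : R) = 1)%R.
      rewrite (bigD1 i) //= eqxx big1 ?addr0 // => j /negbTE.
      by rewrite eq_sym => ->.
    have hle : (\sum_(j : 'I_n) (1 - ((i == j)%:R : R)) <=
                \sum_(j : 'I_n) (s i + s j - (i == j)%:R * (2 * s i)))%R.
      apply: ler_sum => j _. case: eqVneq => [<-|ij] /=.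
        by rewrite subrr mul1r mulr_natl mulr2n subrr.
      rewrite subr0 mul0r subr0. exact: hpair.
    move: hle. rewrite !sumrB sumr_const card_ord -mulr_suml hd mul1r big_split /=.
    rewrite sumr_const card_ord -/S -[(s i *+ n)%R]mulr_natr => h. clear -h. lra.
  have := ler_sum (index_enum 'I_n) (fun i _ => hi i).
  move=> /(_ xpredT). rewrite sumr_const card_ord -mulr_sumr -/S hS -[((_ - S) *+ n)%R]mulr_natr => h.
  have hn3 : (3%:R <= n%:R :> R)%R by rewrite ler_nat.
  move: h hn3; clear; move=> h hn3. have h3 : (0 < n%:R - 1 :> R)%R by lra. nra.
Qed.
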